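(* Let $Q$ be a restriction quantal frame. Then the set $\mathsf{PI}(Q)$ of partial isometries of $Q$, with the multiplication, identity $e$ and operations $\ast,+$ inherited from $Q$, is a complete restriction monoid.
   Context: A restriction quantal frame is a frame $(Q,\le)$ with an associative multiplication distributing over arbitrary joins on both sides, which is a monoid with identity $e$ and carries join-preserving unary operations $a\mapsto a^{\ast}$, $a\mapsto a^{+}$ with values in the set $e^{\downarrow}=\{x:x\le e\}$ of projections (a commutative subsemigroup of idempotents), fixing projections, with $aa^{\ast}=a$, $a^{+}a=a$, $(ab)^{\ast}=(a^{\ast}b)^{\ast}$, $(ab)^{+}=(ab^{+})^{+}$; the top element is a join of partial isometries and partial isometries are closed under product. $a$ is a partial isometry if $b\le a$ implies $b=b^{+}a=ab^{\ast}$. An Ehresmann monoid is a monoid with such operations $\ast,+$ onto a commutative subsemigroup of idempotents satisfying the four identities above; it is a restriction monoid if in addition $fa=a(fa)^{\ast}$ and $af=(af)^{+}a$ for all projections $f$ and elements $a$. Its natural partial order is $a\le b$ iff $a=a^{+}b=ba^{\ast}$. Elements $a,b$ are compatible if $ab^{\ast}=ba^{\ast}$ and $b^{+}a=a^{+}b$. A restriction monoid is complete if every set of pairwise compatible elements has a join (in the natural partial order) and multiplication distributes over such joins. *)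

(* Defs.v *)
Section Defs.
Context {Q : Type}.

Definition img (f : Q -> Q) (A : Q -> Prop) : Q -> Prop :=
  fun y => exists a, A a /\ y = f a.

Definition is_lub (le : Q -> Q -> Prop) (A : Q -> Prop) (x : Q) : Prop :=
  (forall a, A a -> le a x) /\
  (forall y, (forall a, A a -> le a y) -> le x y).

Definition is_glb2 (le : Q -> Q -> Prop) (a b x : Q) : Prop :=
  le x a /\ le x b /\ (forall y, le y a -> le y b -> le y x).

Definition partial_order (le : Q -> Q -> Prop) : Prop :=
  (forall a, le a a) /\
  (forall a b, le a b -> le b a -> a = b) /\
  (forall a b c, le a b -> le b c -> le a c).

Definition is_frame (le : Q -> Q -> Prop) (sup : (Q -> Prop) -> Q)
    (meet : Q -> Q -> Q) : Prop :=
  partial_order le /\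
  (forall A, is_lub le A (sup A)) /\
  (forall a b, is_glb2 le a b (meet a b)) /\
  (forall a A, meet a (sup A) = sup (img (meet a) A)).

Definition partial_isometry (le : Q -> Q -> Prop) (mul : Q -> Q -> Q)
    (star plus : Q -> Q) (a : Q) : Prop :=
  forall b, le b a -> b = mul (plus b) a /\ b = mul a (star b).

Definition restriction_quantal_frame (le : Q -> Q -> Prop)
    (sup : (Q -> Prop) -> Q) (meet : Q -> Q -> Q) (mul : Q -> Q -> Q)
    (e : Q) (star plus : Q -> Q) : Prop :=
  is_frame le sup meet /\
  (forall a b c, mul a (mul b c) = mul (mul a b) c) /\
  (forall a A, mul a (sup A) = sup (img (mul a) A)) /\
  (forall a A, mul (sup A) a = sup (img (fun x => mul x a) A)) /\
  (forall a, mul e a = a) /\ (forall a, mul a e = a) /\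
  (forall f g, le f e -> le g e -> le (mul f g) e) /\
  (forall f g, le f e -> le g e -> mul f g = mul g f) /\
  (forall f, le f e -> mul f f = f) /\
  (forall A, star (sup A) = sup (img star A)) /\
  (forall A, plus (sup A) = sup (img plus A)) /\
  (forall a, le (star a) e) /\ (forall a, le (plus a) e) /\
  (forall f, le f e -> star f = f) /\ (forall f, le f e -> plus f = f) /\
  (forall a, mul a (star a) = a) /\ (forall a, mul (plus a) a = a) /\
  (forall a b, star (mul a b) = star (mul (star a) b)) /\
  (forall a b, plus (mul a b) = plus (mul a (plus b))) /\
  sup (fun _ => True) = sup (partial_isometry le mul star plus) /\
  (forall a b, partial_isometry le mul star plus a ->
     partial_isometry le mul star plus b ->
     partial_isometry le mul star plus (mul a b)).

Definition ehresmann_monoid_on (S : Q -> Prop) (mul : Q -> Q -> Q) (e : Q)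
    (star plus : Q -> Q) (E : Q -> Prop) : Prop :=
  S e /\ (forall a b, S a -> S b -> S (mul a b)) /\
  (forall a, S a -> S (star a)) /\ (forall a, S a -> S (plus a)) /\
  (forall a b c, S a -> S b -> S c -> mul a (mul b c) = mul (mul a b) c) /\
  (forall a, S a -> mul e a = a) /\ (forall a, S a -> mul a e = a) /\
  (forall f, E f -> S f) /\
  (forall f g, E f -> E g -> E (mul f g)) /\
  (forall f g, E f -> E g -> mul f g = mul g f) /\
  (forall f, E f -> mul f f = f) /\
  (forall a, S a -> E (star a)) /\ (forall a, S a -> E (plus a)) /\
  (forall f, E f -> star f = f) /\ (forall f, E f -> plus f = f) /\
  (forall a, S a -> mul a (star a) = a) /\
  (forall a, S a -> mul (plus a) a = a) /\
  (forall a b, S a -> S b -> star (mul a b) = star (mul (star a) b)) /\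
  (forall a b, S a -> S b -> plus (mul a b) = plus (mul a (plus b))).

Definition restriction_monoid_on (S : Q -> Prop) (mul : Q -> Q -> Q) (e : Q)
    (star plus : Q -> Q) : Prop :=
  exists E : Q -> Prop,
    ehresmann_monoid_on S mul e star plus E /\
    (forall f a, E f -> S a -> mul f a = mul a (star (mul f a))) /\
    (forall f a, E f -> S a -> mul a f = mul (plus (mul a f)) a).

Definition nat_le (mul : Q -> Q -> Q) (star plus : Q -> Q) (a b : Q) : Prop :=
  a = mul (plus a) b /\ a = mul b (star a).

Definition compatible (mul : Q -> Q -> Q) (star plus : Q -> Q) (a b : Q)
    : Prop :=
  mul a (star b) = mul b (star a) /\ mul (plus b) a = mul (plus a) b.

Definition is_lub_in (S : Q -> Prop) (R : Q -> Q -> Prop) (A : Q -> Prop)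
    (x : Q) : Prop :=
  S x /\ (forall a, A a -> R a x) /\
  (forall y, S y -> (forall a, A a -> R a y) -> R x y).

Definition complete_restriction_monoid_on (S : Q -> Prop)
    (mul : Q -> Q -> Q) (e : Q) (star plus : Q -> Q) : Prop :=
  restriction_monoid_on S mul e star plus /\
  forall A : Q -> Prop,
    (forall a, A a -> S a) ->
    (forall a b, A a -> A b -> compatible mul star plus a b) ->
    exists x, is_lub_in S (nat_le mul star plus) A x /\
      (forall c, S c ->
         is_lub_in S (nat_le mul star plus) (img (mul c) A) (mul c x) /\
         is_lub_in S (nat_le mul star plus) (img (fun a => mul a c) A)
                   (mul x c)).

End Defs.

(* Main.v *)
Require Import Defs.

Theorem mainTheorem6 (Q : Type) (le : Q -> Q -> Prop)
    (sup : (Q -> Prop) -> Q) (meet : Q -> Q -> Q) (mul : Q -> Q -> Q)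
    (e : Q) (star plus : Q -> Q) :
  restriction_quantal_frame le sup meet mul e star plus ->
  complete_restriction_monoid_on (partial_isometry le mul star plus)
    mul e star plus.
Proof.
intros H.
destruct H as (Hfr & Hassoc & HdistL & HdistR & Hel & Her & Hpc & Hpcomm & Hpid
  & Hstsup & Hplsup & Hste & Hple & Hstfix & Hplfix & Hast & Hpla & Hstmul
  & Hplmul & Htop & Hpimul).
destruct Hfr as ((Hrefl & Hanti & Htrans) & Hlub & Hglb & Hmeetd).
set (S := partial_isometry le mul star plus).
assert (sup_ub : forall A a, A a -> le a (sup A)) by (intros A; exact (proj1 (Hlub A))).
assert (sup_least : forall A y, (forall a, A a -> le a y) -> le (sup A) y)
  by (intros A; exact (proj2 (Hlub A))).
assert (pair : forall a b, le a b -> sup (fun z => z = a \/ z = b) = b).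
{ intros a b Hab. apply Hanti.
  - apply sup_least. intros z [-> | ->]; auto.
  - apply sup_ub; auto. }
assert (mulmonoL : forall c a b, le a b -> le (mul c a) (mul c b)).
{ intros c a b Hab. pose proof (pair a b Hab) as E. rewrite <- E.
  rewrite HdistL. apply sup_ub. exists a. split; [left; reflexivity | reflexivity]. }
assert (mulmonoR : forall c a b, le a b -> le (mul a c) (mul b c)).
{ intros c a b Hab. pose proof (pair a b Hab) as E. rewrite <- E.
  rewrite HdistR. apply sup_ub. exists a. split; [left; reflexivity | reflexivity]. }
assert (plusmono : forall a b, le a b -> le (plus a) (plus b)).
{ intros a b Hab. pose proof (pair a b Hab) as E. rewrite <- E.
  rewrite Hplsup. apply sup_ub. exists a. split; [left; reflexivity | reflexivity]. }
assert (starmono : forall a b, le a b -> le (star a) (star b)).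
{ intros a b Hab. pose proof (pair a b Hab) as E. rewrite <- E.
  rewrite Hstsup. apply sup_ub. exists a. split; [left; reflexivity | reflexivity]. }
assert (mulle : forall a a' b b', le a a' -> le b b' -> le (mul a b) (mul a' b')).
{ intros a a' b b' H1 H2. apply Htrans with (mul a' b); auto. }
assert (projL : forall f a, le f e -> le (mul f a) a).
{ intros f a Hf. pose proof (mulmonoR a f e Hf) as G. rewrite Hel in G. exact G. }
assert (projR : forall f a, le f e -> le (mul a f) a).
{ intros f a Hf. pose proof (mulmonoL a f e Hf) as G. rewrite Her in G. exact G. }
assert (proj_mul : forall b f, le b f -> le f e -> mul b f = b).
{ intros b f Hb Hf. assert (Hbe : le b e) by eauto. apply Hanti.
  - apply projR; auto.
  - pose proof (mulmonoL b b f Hb) as G. rewrite (Hpid b Hbe) in G. exact G. }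
assert (proj_mul' : forall b f, le b f -> le f e -> mul f b = b).
{ intros b f Hb Hf. rewrite Hpcomm; eauto. }
assert (projS : forall f, le f e -> S f).
{ intros f Hf b Hb. assert (Hbe : le b e) by eauto.
  rewrite (Hplfix b Hbe), (Hstfix b Hbe).
  split; symmetry; [apply proj_mul | apply proj_mul']; auto. }
assert (natle_le : forall a b, nat_le mul star plus a b -> le a b).
{ intros a b [H1 _]. rewrite H1. apply projL. auto. }
assert (lub_in : forall B, S (sup B) -> is_lub_in S (nat_le mul star plus) B (sup B)).
{ intros B HS. split; [exact HS|]. split.
  - intros a Ha. apply (HS a). auto.
  - intros y Hy Hall. apply (Hy (sup B)). apply sup_least. intros a Ha. auto. }
assert (Kx : forall A, (forall a, A a -> S a) ->
   (forall a b, A a -> A b -> compatible mul star plus a b) -> S (sup A)).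
{ intros A HS Hc b Hb.
  set (x := sup A) in *.
  assert (Hmb : meet b x = b).
  { destruct (Hglb b x) as (G1 & G2 & G3). apply Hanti; auto. }
  assert (Eb : b = sup (img (meet b) A)) by (rewrite <- Hmeetd; auto).
  assert (Hma : forall a, A a -> le (meet b a) a)
    by (intros a _; destruct (Hglb b a) as (G1 & G2 & G3); auto).
  assert (Hmb' : forall a, le (meet b a) b)
    by (intros a; destruct (Hglb b a) as (G1 & G2 & G3); auto).
  assert (Hba : forall a, A a -> meet b a = mul (plus (meet b a)) a /\
                                 meet b a = mul a (star (meet b a)))
    by (intros a Ha; apply (HS a Ha); auto).
  split.
  - apply Hanti.
    + assert (G : le (sup (img (meet b) A)) (mul (plus b) x)).
      { apply sup_least. intros y (a & Ha & ->).
        apply Htrans with (mul (plus (meet b a)) a);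
          [rewrite <- (proj1 (Hba a Ha)); apply Hrefl|]. apply mulle.
        - apply plusmono; auto.
        - unfold x; auto. }
      rewrite <- Eb in G. exact G.
    + assert (Ep : plus b = sup (img plus (img (meet b) A)))
        by (rewrite <- Hplsup, <- Eb; reflexivity).
      rewrite Ep, HdistR. apply sup_least.
      intros y (p & (q & (a & Ha & ->) & ->) & ->).
      unfold x. rewrite HdistL. apply sup_least. intros z (a' & Ha' & ->).
      set (f := plus (meet b a)).
      assert (Hf : le f (plus a)) by (apply plusmono; auto).
      assert (Ef : mul f (plus a) = f) by (apply proj_mul; auto).
      rewrite <- Ef, <- Hassoc.
      destruct (Hc a' a Ha' Ha) as [_ C2]. rewrite C2, Hassoc.
      apply Htrans with (mul f a).
      * apply mulmonoR. apply projR. auto.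
      * unfold f. rewrite <- (proj1 (Hba a Ha)). auto.
  - apply Hanti.
    + assert (G : le (sup (img (meet b) A)) (mul x (star b))).
      { apply sup_least. intros y (a & Ha & ->).
        apply Htrans with (mul a (star (meet b a)));
          [rewrite <- (proj2 (Hba a Ha)); apply Hrefl|]. apply mulle.
        - unfold x; auto.
        - apply starmono; auto. }
      rewrite <- Eb in G. exact G.
    + assert (Es : star b = sup (img star (img (meet b) A)))
        by (rewrite <- Hstsup, <- Eb; reflexivity).
      rewrite Es, HdistL. apply sup_least.
      intros y (p & (q & (a & Ha & ->) & ->) & ->).
      unfold x. rewrite HdistR. apply sup_least. intros z (a' & Ha' & ->).
      set (g := star (meet b a)).
      assert (Hg : le g (star a)) by (apply starmono; auto).
      assert (Eg : mul (star a) g = g) by (apply proj_mul'; auto).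
      rewrite <- Eg, Hassoc.
      destruct (Hc a' a Ha' Ha) as [C1 _]. rewrite C1, <- Hassoc.
      apply Htrans with (mul a g).
      * apply mulmonoL. apply projL. auto.
      * unfold g. rewrite <- (proj2 (Hba a Ha)). auto. }
split.
- exists (fun f => le f e). split; [|split].
  + unfold ehresmann_monoid_on.
    repeat split; try solve [auto | apply projS; auto | intros; apply projS; auto
      | intros; apply Hpimul; auto].
  + intros f a Hf Ha. apply (Ha (mul f a)). apply projL; auto.
  + intros f a Hf Ha. apply (Ha (mul a f)). apply projR; auto.
- intros A HS Hc. exists (sup A). split.
  + apply lub_in. apply Kx; auto.
  + intros c Hc'. split.
    * rewrite HdistL. apply lub_in. rewrite <- HdistL. apply Hpimul; first [apply Kx; auto | auto].
    * rewrite HdistR. apply lub_in. rewrite <- HdistR. apply Hpimul; first [apply Kx; auto | auto].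
Qed.
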